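(* Let $v$ be as defined below, and on the arc $\Gamma_1=\{Q=1,\ x_0>1,\ \theta=0\}$ (parametrised by $x_0\in(1,\infty)$) regard $f=p^6/18$ as a function of $v\in(0,\infty)$. Then $f''(v)>0$, i.e. $f$ is strictly convex as a function of $v$; indeed $f'(v)=H/v$ and $\frac{d}{dx_0}(H/v)=\frac{p^2}{v}(p^2-x_0)>0$.
   Context: On $\mathbb R^3$: $r^2=x_1^2+x_2^2$, $Q=x_0^2-\tfrac12r^2$, $H=x_0r^2$, $p=(4x_0^2+r^2)^{1/4}$. On the arc with $Q=1$, $x_0>1$, we have $r^2=2(x_0^2-1)$. $v\colon(1,\infty)\to(0,\infty)$ is a positive solution of $\frac{dv}{dx_0}=\frac{\sqrt{3x_0^2-1}}{\sqrt2(x_0^2-1)}v$, extended by $v(1)=0$ (so $v$ is increasing with $\frac{dv}{dx_0}=\frac{p^2}{r^2}v$). *)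

(* Defs.v *)
From Stdlib Require Import Reals.
From Coquelicot Require Import Coquelicot.
Open Scope R_scope.

Definition rsq (x1 x2 : R) : R := x1 ^ 2 + x2 ^ 2.
Definition Qf (x0 x1 x2 : R) : R := x0 ^ 2 - / 2 * rsq x1 x2.
Definition Hf (x0 x1 x2 : R) : R := x0 * rsq x1 x2.
Definition pf (x0 x1 x2 : R) : R := Rpower (4 * x0 ^ 2 + rsq x1 x2) (/ 4).

(* The arc Gamma_1 = {Q = 1, x0 > 1, theta = 0}, parametrised by x0 > 1:
   the point (x0, r, 0) with r = sqrt (2 (x0^2 - 1)) >= 0 (angle theta = 0). *)
Definition g1 (x0 : R) : R := sqrt (2 * (x0 ^ 2 - 1)).

Definition p_arc (x0 : R) : R := pf x0 (g1 x0) 0.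
Definition H_arc (x0 : R) : R := Hf x0 (g1 x0) 0.
Definition f_arc (x0 : R) : R := p_arc x0 ^ 6 / 18.

(* Main.v *)
From Stdlib Require Import Reals Ranalysis5 Lra ClassicalEpsilon.
From Coquelicot Require Import Coquelicot.
Require Import Defs.
Open Scope R_scope.

Definition sx (x : R) := sqrt (6 * x ^ 2 - 2).

Lemma g1_sq x : 1 < x -> g1 x ^ 2 = 2 * (x ^ 2 - 1).
Proof. intros h. unfold g1. rewrite <- Rsqr_pow2. apply Rsqr_sqrt. nra. Qed.

Lemma p2_arc x : 1 < x -> p_arc x ^ 2 = sx x.
Proof.
  intros h. unfold p_arc, pf, rsq, sx. rewrite g1_sq by lra.
  replace (4 * x ^ 2 + (2 * (x ^ 2 - 1) + 0 ^ 2)) with (6 * x ^ 2 - 2) by ring.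
  assert (hp : 0 < 6 * x ^ 2 - 2) by nra.
  rewrite <- Rpower_pow by (unfold Rpower; apply exp_pos).
  rewrite Rpower_mult. simpl INR. rewrite <- Rpower_sqrt by exact hp.
  f_equal. field.
Qed.

Lemma sx_pos x : 1 < x -> 0 < sx x.
Proof. intros h. unfold sx. apply sqrt_lt_R0. nra. Qed.

Lemma sx_sq x : 1 < x -> sx x ^ 2 = 6 * x ^ 2 - 2.
Proof. intros h. unfold sx. rewrite <- Rsqr_pow2. apply Rsqr_sqrt. nra. Qed.

Lemma f_arc_eq x : 1 < x -> f_arc x = sx x ^ 3 / 18.
Proof.
  intros h. unfold f_arc. replace (p_arc x ^ 6) with ((p_arc x ^ 2) ^ 3) by ring.
  rewrite p2_arc by lra. reflexivity.
Qed.

Lemma H_arc_eq x : 1 < x -> H_arc x = 2 * x * (x ^ 2 - 1).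
Proof. intros h. unfold H_arc, Hf, rsq. rewrite g1_sq by lra. ring. Qed.

Lemma coef_eq x : 1 < x ->
  sqrt (3 * x ^ 2 - 1) / (sqrt 2 * (x ^ 2 - 1)) = sx x / (2 * (x ^ 2 - 1)).
Proof.
  intros h. unfold sx.
  replace (6 * x ^ 2 - 2) with (2 * (3 * x ^ 2 - 1)) by ring.
  rewrite sqrt_mult by (lra || nra).
  assert (h2 : 0 < sqrt 2) by (apply sqrt_lt_R0; lra).
  assert (h3 : sqrt 2 * sqrt 2 = 2) by (apply sqrt_sqrt; lra).
  field_simplify_eq; [| nra]. rewrite <- (Rsqr_pow2 (sqrt 2)), Rsqr_sqrt by lra. ring.
Qed.

Lemma loc_gt1 x : 1 < x -> locally x (fun t => 1 < t).
Proof.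
  intros h. assert (He : 0 < x - 1) by lra.
  exists (mkposreal _ He). intros t Ht.
  change (Rabs (t - x) < x - 1) in Ht. apply Rabs_lt_between' in Ht. lra.
Qed.

Lemma sx_der x : 1 < x -> is_derive sx x (6 * x / sx x).
Proof.
  intros h. unfold sx. auto_derive.
  - nra.
  - replace (6 * (x * (x * 1)) + - (2)) with (6 * x ^ 2 - 2) by ring.
    field. apply Rgt_not_eq. apply sqrt_lt_R0. nra.
Qed.

Lemma f_arc_der x : 1 < x -> is_derive f_arc x (x * sx x).
Proof.
  intros h. apply (is_derive_ext_loc (fun t => sx t ^ 3 / 18)).
  - generalize (loc_gt1 x h). apply filter_imp. intros t ht. symmetry. apply f_arc_eq; auto.
  - pose proof (sx_der x h) as D.
    pose proof (sx_pos x h).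
    apply (is_derive_ext (fun t => / 18 * (sx t ^ 3))); [intros t; simpl; field|].
    replace (x * sx x) with (/18 * (INR 3 * (6 * x / sx x) * sx x ^ Init.Nat.pred 3)).
    + apply is_derive_scal. apply (is_derive_pow sx 3 x _ D).
    + simpl. field. lra.
Qed.
Lemma loc_int (A B y : R) : A < y < B -> locally y (fun t => A < t < B).
Proof.
  intros [H1 H2].
  assert (He : 0 < Rmin (y - A) (B - y)) by (apply Rmin_pos; lra).
  exists (mkposreal _ He). intros t Ht.
  change (Rabs (t - y) < Rmin (y - A) (B - y)) in Ht.
  apply Rabs_lt_between' in Ht.
  pose proof (Rmin_l (y - A) (B - y)). pose proof (Rmin_r (y - A) (B - y)). lra.
Qed.

Lemma inv_local (v c : R -> R) (a b : R) :
  a < b ->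
  (forall x, a <= x <= b -> is_derive v x (c x)) ->
  (forall x, a <= x <= b -> 0 < c x) ->
  exists g : R -> R,
    (forall y, v a <= y <= v b -> a <= g y <= b /\ v (g y) = y) /\
    (forall x, a <= x <= b -> g (v x) = x) /\
    (forall y, v a < y < v b -> is_derive g y (1 / c (g y))).
Proof.
  intros hab hd hc.
  assert (incr : forall x y, a <= x -> x < y -> y <= b -> v x < v y).
  { intros x y hx hxy hy.
    apply (incr_function_le v (Finite a) (Finite b) c); simpl; try assumption.
    - intros t h1 h2. apply hd; auto.
    - intros t h1 h2. apply hc; auto. }
  assert (cont : forall x, a <= x <= b -> continuity_pt v x).
  { intros x hx. apply derivable_continuous_pt.
    exists (c x). apply is_derive_Reals. auto. }
  assert (ex : forall y, exists x, v a <= y <= v b -> a <= x <= b /\ v x = y).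
  { intros y. destruct (Rle_dec (v a) y) as [h1|h1].
    - destruct (Rle_dec y (v b)) as [h2|h2].
      + destruct (f_interv_is_interv v a b y hab (conj h1 h2) cont) as [x Hx].
        exists x. auto.
      + exists a. intros; lra.
    - exists a. intros; lra. }
  set (g := fun y => proj1_sig (constructive_indefinite_description _ (ex y))).
  assert (hg : forall y, v a <= y <= v b -> a <= g y <= b /\ v (g y) = y).
  { intros y. unfold g. destruct (constructive_indefinite_description _ (ex y)). simpl. auto. }
  assert (hgv : forall x, a <= x <= b -> g (v x) = x).
  { intros x hx.
    assert (hvx : v a <= v x <= v b).
    { split; destruct (Req_dec x a); destruct (Req_dec x b); subst; try lra;
      apply Rlt_le; apply incr; lra. }
    destruct (hg _ hvx) as [h1 h2].
    destruct (Rtotal_order (g (v x)) x) as [h|[h|h]]; auto.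
    - pose proof (incr _ _ (proj1 h1) h (proj2 hx)). lra.
    - pose proof (incr _ _ (proj1 hx) h (proj2 h1)). lra. }
  exists g. split; [exact hg|split; [exact hgv|]].
  intros y hy.
  assert (hvab : v a < v b) by (apply incr; lra).
  assert (gcont : continuity_pt g y).
  { apply (continuity_pt_recip_interv v g a b hab incr).
    - intros t h1 h2. unfold comp, id. apply hg; lra.
    - intros t h1 h2. apply hg; lra.
    - exact cont.
    - exact hy. }
  assert (Prf : forall t, g (v a) <= t <= g (v b) -> derivable_pt v t).
  { intros t ht. rewrite !hgv in ht by lra.
    exists (c t). apply is_derive_Reals. auto. }
  assert (hgy : g (v a) <= g y <= g (v b)).
  { rewrite !hgv by lra. apply hg; lra. }
  pose proof (derivable_pt_lim_recip_interv v g (v a) (v b) y Prf gcont hvab hy hgy) as H.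
  assert (Hd : derive_pt v (g y) (Prf (g y) hgy) = c (g y)).
  { apply derive_pt_eq_0. apply is_derive_Reals. apply hd. apply hg; lra. }
  rewrite Hd in H.
  apply is_derive_Reals. apply H.
  - intros t ht. unfold comp, id. apply hg; auto.
  - assert (0 < c (g y)) by (apply hc; apply hg; lra). lra.
Qed.
Section M.
Variable (v : R -> R)
  (hv_pos : forall x0, 1 < x0 -> 0 < v x0)
  (hv_ode : forall x0, 1 < x0 ->
     is_derive v x0 (sqrt (3 * x0 ^ 2 - 1) / (sqrt 2 * (x0 ^ 2 - 1)) * v x0))
  (F : R -> R)
  (hF : forall x0, 1 < x0 -> F (v x0) = f_arc x0).

Let c x := sqrt (3 * x ^ 2 - 1) / (sqrt 2 * (x ^ 2 - 1)) * v x.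

Lemma c_eq x : 1 < x -> c x = sx x / (2 * (x ^ 2 - 1)) * v x.
Proof. intros h. unfold c. rewrite coef_eq; auto. Qed.

Lemma c_pos x : 1 < x -> 0 < c x.
Proof.
  intros h. rewrite c_eq by auto. pose proof (sx_pos x h). pose proof (hv_pos x h).
  apply Rmult_lt_0_compat; auto. apply Rdiv_lt_0_compat; nra.
Qed.

Lemma local_inv x : 1 < x -> exists g A B, A < v x < B /\ g (v x) = x /\
   (forall y, A < y < B -> 1 < g y /\ v (g y) = y /\ is_derive g y (1 / c (g y))).
Proof.
  intros h.
  destruct (inv_local v c ((1 + x) / 2) (x + 1)) as [g [H1 [H2 H3]]].
  - lra.
  - intros t ht. apply hv_ode. lra.
  - intros t ht. apply c_pos. lra.
  - assert (incr : forall a b, (1+x)/2 <= a -> a < b -> b <= x + 1 -> v a < v b).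
    { intros a b ha hab hb.
      apply (incr_function_le v (Finite ((1+x)/2)) (Finite (x+1)) c); simpl; try assumption.
      - intros t h1 h2. apply hv_ode; lra.
      - intros t h1 h2. apply c_pos; lra. }
    exists g, (v ((1+x)/2)), (v (x+1)). split; [split; apply incr; lra|].
    split; [apply H2; lra|].
    intros y hy. destruct (H1 y) as [h4 h5]; [lra|].
    split; [lra|]. split; auto.
Qed.

Lemma P1 x : 1 < x -> is_derive F (v x) (H_arc x / v x).
Proof.
  intros h. destruct (local_inv x h) as [g [A [B [hAB [hg hloc]]]]].
  apply (is_derive_ext_loc (fun y => f_arc (g y))).
  - generalize (loc_int A B (v x) hAB). apply filter_imp. intros t ht.
    destruct (hloc t ht) as [h1 [h2 _]]. rewrite <- h2 at 2. symmetry. apply hF; auto.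
  - destruct (hloc (v x) hAB) as [_ [_ hd]]. rewrite hg in hd.
    pose proof (is_derive_comp f_arc g (v x) _ _ (f_arc_der (g (v x)) ltac:(rewrite hg; lra)) hd) as D.
    rewrite hg in D. unfold scal in D; simpl in D; unfold mult in D; simpl in D.
    replace (H_arc x / v x) with (1 / c x * (x * sx x)); auto.
    rewrite c_eq, H_arc_eq by auto. pose proof (sx_pos x h). pose proof (hv_pos x h).
    field. repeat split; nra.
Qed.

Lemma P2 x : 1 < x -> is_derive (fun y => H_arc y / v y) x
      (p_arc x ^ 2 / v x * (p_arc x ^ 2 - x)).
Proof.
  intros h. rewrite p2_arc by auto.
  apply (is_derive_ext_loc (fun y => (2 * y * (y ^ 2 - 1)) / v y)).
  - generalize (loc_gt1 x h). apply filter_imp. intros t ht. rewrite H_arc_eq; auto.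
  - pose proof (hv_pos x h). pose proof (sx_pos x h). pose proof (sx_sq x h).
    assert (D1 : is_derive (fun y => 2 * y * (y ^ 2 - 1)) x (6 * x ^ 2 - 2)).
    { auto_derive; auto. ring. }
    pose proof (is_derive_div _ _ x _ _ D1 (hv_ode x h) ltac:(lra)) as D.
    fold (c x) in D. rewrite c_eq in D by auto.
    replace (sx x / v x * (sx x - x)) with
      (((6 * x ^ 2 - 2) * v x - 2 * x * (x ^ 2 - 1) * (sx x / (2 * (x ^ 2 - 1)) * v x)) / v x ^ 2); auto.
    rewrite <- H1. field. split; nra.
Qed.

Lemma P3 x : 1 < x -> 0 < p_arc x ^ 2 / v x * (p_arc x ^ 2 - x).
Proof.
  intros h. rewrite p2_arc by auto.
  pose proof (hv_pos x h). pose proof (sx_pos x h). pose proof (sx_sq x h).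
  apply Rmult_lt_0_compat. apply Rdiv_lt_0_compat; auto. nra.
Qed.

Lemma P4 x : 1 < x -> exists d2, is_derive_n F 2 (v x) d2 /\ 0 < d2.
Proof.
  intros h. destruct (local_inv x h) as [g [A [B [hAB [hg hloc]]]]].
  exists (1 / c x * (p_arc x ^ 2 / v x * (p_arc x ^ 2 - x))). split.
  - simpl.
    apply (is_derive_ext_loc (fun y => H_arc (g y) / v (g y))).
    + generalize (loc_int A B (v x) hAB). apply filter_imp. intros t ht.
      destruct (hloc t ht) as [h1 [h2 _]].
      symmetry. apply is_derive_unique. rewrite <- h2 at 1. apply P1; auto.
    + destruct (hloc (v x) hAB) as [_ [_ hd]]. rewrite hg in hd.
      pose proof (is_derive_comp (fun y => H_arc y / v y) g (v x) _ _
                   (P2 (g (v x)) ltac:(rewrite hg; lra)) hd) as D.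
      rewrite hg in D. exact D.
  - pose proof (P3 x h). pose proof (c_pos x h).
    apply Rmult_lt_0_compat; auto. apply Rdiv_lt_0_compat; lra.
Qed.
End M.

Theorem mainTheorem9
  (v : R -> R)
  (hv_pos : forall x0, 1 < x0 -> 0 < v x0)
  (hv_1 : v 1 = 0)
  (hv_ode : forall x0, 1 < x0 ->
     is_derive v x0 (sqrt (3 * x0 ^ 2 - 1) / (sqrt 2 * (x0 ^ 2 - 1)) * v x0))
  (F : R -> R)
  (hF : forall x0, 1 < x0 -> F (v x0) = f_arc x0) :
  forall x0, 1 < x0 ->
    is_derive F (v x0) (H_arc x0 / v x0) /\
    is_derive (fun y => H_arc y / v y) x0
      (p_arc x0 ^ 2 / v x0 * (p_arc x0 ^ 2 - x0)) /\
    0 < p_arc x0 ^ 2 / v x0 * (p_arc x0 ^ 2 - x0) /\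
    (exists d2 : R, is_derive_n F 2 (v x0) d2 /\ 0 < d2).
Proof.
  intros x h. split; [|split; [|split]].
  - apply P1; auto.
  - apply P2; auto.
  - apply P3; auto.
  - apply (P4 v hv_pos hv_ode F hF); auto.
Qed.
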